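(* Let $\mathcal{T}$ be an MPQ-tree of an interval graph $G=(V,E)$, let $(x,y)\in E$ with $x$ over $y$ and $node(x)\neq node(y)$, and suppose the $\langle x,y\rangle$-tree-path is almost rotable and starts in a central section $S_a$ of the Q-node $node(x)$, whose sections are $S_1,\dots,S_k$. Suppose $y$ has no neighbour in $V_a\setminus\{y\}$ (the vertex set of the subtree $T_a$), and at least one of the following holds: (1) there is $b$ with $1<b\le l(x)$ such that $S_a\setminus\{x\}\subseteq S_b$ and $S_{b-1}\cap S_b\subseteq S_a$; (2) there is $b$ with $r(x)\le b<k$ such that $S_a\setminus\{x\}\subseteq S_b$ and $S_b\cap S_{b+1}\subseteq S_a$; (3) $S_a\setminus\{x\}\subseteq S_1$; (4) $S_a\setminus\{x\}\subseteq S_k$. Then $(x,y)$ is an interval edge.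
   Context: Graphs are finite and simple; for $G=(V,E)$ and $e\in E$, $G-e=(V,E\setminus\{e\})$. An edge $(x,y)\in E$ of an interval graph $G$ is an interval edge if $G-(x,y)$ is an interval graph. An MPQ-tree of an interval graph $G=(V,E)$, $V=\{1,\dots,n\}$, is a rooted plane tree whose nodes are P-nodes and Q-nodes. Each P-node carries a (possibly empty) set of vertices. A Q-node has $k\ge 3$ ordered positions $1,\dots,k$; position $i$ carries a set $S_i\subseteq V$ (the $i$-th section) and a child subtree $T_i$, which may be empty. Every vertex $v$ is assigned to exactly one node $node(v)$: either $v$ lies in the set of the P-node $node(v)$, or $node(v)$ is a Q-node and $v$ lies exactly in the sections $S_{l(v)},\dots,S_{r(v)}$ of it, with $l(v)<r(v)$. For a node with child subtrees $T_1,\dots,T_k$, $V_i$ denotes the set of vertices assigned to nodes of $T_i$ ($V_i=\emptyset$ if $T_i$ is empty). The maximal cliques of $G$ are in bijection with the descending paths from the root which at a P-node continue into one of its children (stopping if there is none) and at a Q-node choose a position $i$ and continue into $T_i$ (stopping if $T_i$ is empty); the clique is the union of the sets of the visited P-nodes and the chosen sections. Reading these cliques left to right gives a linear order of the maximal cliques, and the orders obtained this way after arbitrarily permuting children of P-nodes and reversing the positions of Q-nodes are exactly the orders of the maximal cliques of $G$ in which the cliques containing any fixed vertex are consecutive. Moreover, for every Q-node with sections $S_1,\dots,S_k$: (a) $V_1\neq\emptyset$ and $V_k\ne\emptyset$; (b) $S_1\subseteq S_2$ and $S_k\subseteq S_{k-1}$; (c) $S_{i-1}\cap S_i\neq\emptyset$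 for $2\le i\le k$; (d) $S_{i-1}\neq S_i$ for $2\le i\le k$; (e) $(S_i\cap S_{i+1})\setminus S_1\neq\emptyset$ and $(S_{i-1}\cap S_i)\setminus S_k\neq\emptyset$ for $2\le i\le k-1$; (f) $(S_{i-1}\cup V_{i-1})\setminus S_i\neq\emptyset$ and $(S_i\cup V_i)\setminus S_{i-1}\neq\emptyset$ for $2\le i\le k$; and further (g) no empty P-node has an empty P-node as its parent, (h) no P-node has exactly one child whose root is a P-node, (i) every child subtree of a P-node is nonempty. We say $x$ is over $y$ if $node(x)$ is the lowest common ancestor of $node(x)$ and $node(y)$ in $\mathcal{T}$. For $x$ over $y$ with $node(x)\ne node(y)$, the $\langle x,y\rangle$-tree-path is the tree path $node(x)=n_1,n_2,\dots,n_t=node(y)$. For a Q-node with sections $S_1,\dots,S_k$, section $S_a$ is central if $1<a<k$, and for a vertex $v$ of that Q-node it is $v$-central if $l(v)<a<r(v)$ and $v$-non-central if $a\in\{l(v),r(v)\}$. The path goes through a central section if for some $1<i<t$, $n_i$ is a Q-node and $n_{i+1}$ lies in the subtree $T_a$ of a central section $S_a$ of $n_i$. The path starts in a central (resp. non-central) section $S_a$ if $n_1$ is a Q-node and $n_2$ lies in the subtree $T_a$ where $S_a$ is an $x$-central (resp. $x$-non-central) section of $n_1$. It starts in a P-node if $n_1$ is a P-node, and ends in a P-node (resp. Q-node) if $n_t$ is a P-node (resp. Q-node). The path is almost rotable if it does not go through a central section and $n_t$ is a P-node that is a leaf of $\mathcal{T}$; it is rotable if it is almost rotable and it either starts in a P-node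 or starts in a non-central section. *)

(* Defs.v *)
From HB Require Import structures.
From mathcomp Require Import all_boot.
Set Implicit Arguments. Unset Strict Implicit. Unset Printing Implicit Defensive.

Section Defs.
Variable V : finType.

Definition simple_graph (E : rel V) : Prop :=
  (forall u v, E u v = E v u) /\ (forall u, ~~ E u u).

(* Interval graph: intersection graph of closed intervals [lo v, hi v]
   (integer endpoints suffice for finite graphs). *)
Definition interval_graph (E : rel V) : Prop :=
  exists lo hi : V -> nat, (forall v, lo v <= hi v) /\
    forall u v, u != v -> E u v = (lo u <= hi v) && (lo v <= hi u).

Definition remove_edge (E : rel V) (x y : V) : rel V :=
  fun u v => E u v && ~~ (((u == x) && (v == y)) || ((u == y) && (v == x))).

Definition interval_edge (E : rel V) (x y : V) : Prop :=
  E x y /\ interval_graph (remove_edge E x y).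

Definition clique (E : rel V) (K : {set V}) : bool :=
  [forall u in K, forall v in K, (u != v) ==> E u v].

Definition maxclique (E : rel V) (K : {set V}) : bool :=
  clique E K && [forall K' : {set V}, (clique E K' && (K \subset K')) ==> (K' == K)].

(* A P-node carries a vertex set and its (ordered) children; a Q-node carries
   its positions 1..k, position i being the pair (S_i, T_i), T_i possibly empty. *)
Inductive mpq : Type :=
| PNode of {set V} & seq mpq
| QNode of seq ({set V} * option mpq).

Definition mpq0 : mpq := PNode set0 [::].
Definition pos0 : {set V} * option mpq := (set0, None).

(* Nodes are addressed by the sequence of (0-based) child indices from the root. *)
Fixpoint subtree (t : mpq) (p : seq nat) : option mpq :=
  match p with
  | [::] => Some t
  | i :: p' =>
    match t with
    | PNode _ cs => if i < size cs then subtree (nth mpq0 cs i) p' else None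
    | QNode ps => match (nth pos0 ps i).2 with
                  | Some c => subtree c p'
                  | None => None
                  end
    end
  end.

Fixpoint allv (t : mpq) : {set V} :=
  match t with
  | PNode X cs => foldr (fun c acc => allv c :|: acc) X cs
  | QNode ps => foldr (fun q acc => q.1 :|: match q.2 with
                                             | Some c => allv c
                                             | None => set0 end :|: acc) set0 ps
  end.

(* Sections and subtree vertex sets of a Q-node, 1-based as in the paper. *)
Definition sec (ps : seq ({set V} * option mpq)) (i : nat) : {set V} :=
  (nth pos0 ps i.-1).1.
Definition Vsub (ps : seq ({set V} * option mpq)) (i : nat) : {set V} :=
  match (nth pos0 ps i.-1).2 with Some c => allv c | None => set0 end.

Definition lpos (v : V) (ps : seq ({set V} * option mpq)) : nat :=
  (find (fun q : {set V} * option mpq => v \in q.1) ps).+1.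
Definition rpos (v : V) (ps : seq ({set V} * option mpq)) : nat :=
  size ps - find (fun q : {set V} * option mpq => v \in q.1) (rev ps).

Definition in_node (v : V) (t : mpq) : bool :=
  match t with
  | PNode X _ => v \in X
  | QNode ps => has (fun q : {set V} * option mpq => v \in q.1) ps
  end.

Definition node_at (T : mpq) (v : V) (p : seq nat) : Prop :=
  exists t, subtree T p = Some t /\ in_node v t.

(* The cliques of the descending paths, read left to right. *)
Fixpoint cliques (t : mpq) : seq {set V} :=
  match t with
  | PNode X cs =>
    if cs is [::] then [:: X]
    else flatten (map (fun c => map (setU X) (cliques c)) cs)
  | QNode ps =>
    flatten (map (fun q => match q.2 with
                           | None => [:: q.1]
                           | Some c => map (setU q.1) (cliques c)
                           end) ps)
  end.

(* Permuting children of P-nodes and reversing Q-nodes (recursively). *)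
Inductive reorder : mpq -> mpq -> Prop :=
| ReorderP X cs cs' (s : seq nat) :
    size cs' = size cs -> perm_eq s (iota 0 (size cs)) ->
    (forall i, i < size cs -> reorder (nth mpq0 cs (nth 0 s i)) (nth mpq0 cs' i)) ->
    reorder (PNode X cs) (PNode X cs')
| ReorderQ ps ps' (rv : bool) :
    size ps' = size ps ->
    (forall i, i < size ps ->
       (nth pos0 ps i).1 = (nth pos0 (if rv then rev ps' else ps') i).1 /\
       (((nth pos0 ps i).2 = None /\ (nth pos0 (if rv then rev ps' else ps') i).2 = None) \/
        exists c c', (nth pos0 ps i).2 = Some c /\
                     (nth pos0 (if rv then rev ps' else ps') i).2 = Some c' /\
                     reorder c c')) ->
    reorder (QNode ps) (QNode ps').

Definition consecutive_clique_order (E : rel V) (s : seq {set V}) : Prop :=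
  uniq s /\ (forall K, maxclique E K = (K \in s)) /\
  forall v i j k, i < j -> j < k -> k < size s ->
    v \in nth set0 s i -> v \in nth set0 s k -> v \in nth set0 s j.

Definition Qnode_props (ps : seq ({set V} * option mpq)) : Prop :=
  let k := size ps in
  let S := sec ps in
  let W := Vsub ps in
  3 <= k /\
   (W 1 != set0 /\ W k != set0) /\
   (S 1 \subset S 2 /\ S k \subset S k.-1) /\
   (forall i, 2 <= i <= k -> S i.-1 :&: S i != set0) /\
   (forall i, 2 <= i <= k -> S i.-1 != S i) /\
   (forall i, 2 <= i <= k.-1 ->
                (S i :&: S i.+1) :\: S 1 != set0 /\ (S i.-1 :&: S i) :\: S k != set0) /\
   (forall i, 2 <= i <= k ->
                (S i.-1 :|: W i.-1) :\: S i != set0 /\ (S i :|: W i) :\: S i.-1 != set0).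

Definition mpq_tree (E : rel V) (T : mpq) : Prop :=
      (forall v, exists! p, node_at T v p) /\
      (forall v p ps, subtree T p = Some (QNode ps) -> in_node v (QNode ps) ->
         lpos v ps < rpos v ps /\
         forall i, 1 <= i <= size ps -> (v \in sec ps i) = (lpos v ps <= i <= rpos v ps)) /\
      (uniq (cliques T) /\ (forall K, maxclique E K = (K \in cliques T))) /\
      (forall s, consecutive_clique_order E s <-> exists T', reorder T T' /\ cliques T' = s) /\
      (forall p ps, subtree T p = Some (QNode ps) -> Qnode_props ps) /\
      (forall p X cs, subtree T p = Some (PNode X cs) ->
         [/\ (X = set0 -> forall i S' cs', subtree T (rcons p i) = Some (PNode S' cs') -> S' != set0),
             ~ (exists S' cs', cs = [:: PNode S' cs']) &
             (forall i, i < size cs -> allv (nth mpq0 cs i) != set0)]).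

(* x over y : node(x) is the lca of node(x), node(y), i.e. a prefix of it. *)
(* The <x,y>-tree-path is node(x) = take (size px) py, ..., take (size py) py = node(y). *)
Definition goes_through_central (T : mpq) (px py : seq nat) : Prop :=
  exists j, [/\ size px < j, j < size py &
    exists ps, subtree T (take j py) = Some (QNode ps) /\
               0 < nth 0 py j < (size ps).-1].

Definition almost_rotable (T : mpq) (px py : seq nat) : Prop :=
  ~ goes_through_central T px py /\ exists X, subtree T py = Some (PNode X [::]).

Definition starts_in_central (T : mpq) (x : V) (px py : seq nat)
    (ps : seq ({set V} * option mpq)) (a : nat) : Prop :=
  [/\ subtree T px = Some (QNode ps), a = (nth 0 py (size px)).+1 &
      lpos x ps < a < rpos x ps].

End Defs.

(* Main.v *)
Require Import Defs.
From mathcomp Require Import all_boot.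
From mathcomp Require Import zify.
Set Implicit Arguments. Unset Strict Implicit. Unset Printing Implicit Defensive.

Section Abstract.
Variables (V : finType) (E : rel V) (s : seq {set V}) (x y : V).
Hypothesis Hsym : forall u v, E u v = E v u.
Hypothesis Hirr : forall u, ~~ E u u.
Hypothesis Hcov : forall u v, u != v -> E u v = has (fun K : {set V} => (u \in K) && (v \in K)) s.
Hypothesis Hall : forall v, has (fun K : {set V} => v \in K) s.
Hypothesis Hcon : forall v i j k, i < j -> j < k -> k < size s ->
    v \in nth set0 s i -> v \in nth set0 s k -> v \in nth set0 s j.
Hypothesis Hxy : E x y.

Definition fstv v := find (fun K : {set V} => v \in K) s.
Definition lstv v := (size s).-1 - find (fun K : {set V} => v \in K) (rev s).

Lemma lst_lt v : lstv v < size s.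
Proof. have := Hall v; rewrite has_find /lstv; lia. Qed.

Lemma Hmem v k : k < size s -> (v \in nth set0 s k) = (fstv v <= k <= lstv v).
Proof.
move=> ks.
have hv := Hall v.
have hr : has (fun K : {set V} => v \in K) (rev s) by rewrite has_rev.
have f1 := nth_find set0 hv.
have r1 := nth_find set0 hr.
have fs : fstv v < size s by rewrite /fstv -has_find.
have rs : find (fun K : {set V} => v \in K) (rev s) < size s by rewrite -size_rev -has_find.
rewrite nth_rev // in r1.
have eL : size s - (find (fun K : {set V} => v \in K) (rev s)).+1 = lstv v by rewrite /lstv; lia.
rewrite eL in r1.
apply/idP/idP.
- move=> hk; apply/andP; split.
  + rewrite leqNgt; apply/negP => kf.
    by have := before_find set0 kf; rewrite hk.
  + rewrite leqNgt; apply/negP => Lk.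
    have r' : size s - k.+1 < find (fun K : {set V} => v \in K) (rev s) by rewrite /lstv in Lk; lia.
    have := before_find set0 r'; rewrite nth_rev; last by lia.
    have -> : size s - (size s - k.+1).+1 = k by lia.
    by rewrite hk.
- case/andP => h1 h2.
  case: (ltngtP (fstv v) k) => [c1||<-] //; last by lia.
  case: (ltngtP k (lstv v)) => [c2||->] //; last by lia.
  by apply: (Hcon c1 c2 (lst_lt v)).
Qed.

Lemma fst_le v : fstv v <= lstv v.
Proof.
have fs : fstv v < size s by rewrite /fstv -has_find.
have := nth_find set0 (Hall v); rewrite -/(fstv v) Hmem //; lia.
Qed.

Lemma Eover u v : u != v -> E u v = (fstv u <= lstv v) && (fstv v <= lstv u).
Proof.
move=> uv; rewrite Hcov //; apply/idP/idP.
- case/(has_nthP set0) => k ks /andP[hu hv].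
  rewrite !Hmem // in hu hv; lia.
- move=> h; apply/(has_nthP set0); exists (maxn (fstv u) (fstv v)).
  + have := lst_lt u; have := fst_le u; have := fst_le v; lia.
  + have := lst_lt u; have := fst_le u; have := fst_le v => *.
    rewrite !Hmem; lia.
Qed.

Lemma gap_left g :
  (forall z, z != y -> z != x -> E y z -> z \in nth set0 s g) ->
  (forall z, z != y -> 0 < g -> z \in nth set0 s g.-1 -> z \in nth set0 s g -> E y z && (z != x)) ->
  interval_edge E x y.
Proof.
move=> H1 H2; split => //.
have xy : x != y by apply/negP => /eqP e; move: Hxy; rewrite e; have := Hirr y => /negP.
pose ext v := [&& fstv v == g, E y v, v != x & v != y].
pose lo v := if v == y then g.*2 else (fstv v).*2.+1 - ext v.
pose hi v := if v == y then g.*2 else (lstv v).*2.+1.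
have key : forall v, v != y -> E y v && (v != x) = (g.*2 <= hi v) && (lo v <= g.*2).
  move=> v vy; rewrite /lo /hi (negbTE vy).
  have fl := fst_le v.
  case ev: (ext v).
  - move: ev => /and4P[/eqP f e vx _]; rewrite e vx /=; lia.
  - apply/idP/idP.
    + case/andP=> e vx.
      have hv := H1 v vy vx e.
      have gs : g < size s by rewrite ltnNge; apply/negP => h; move: hv; rewrite nth_default // inE.
      rewrite Hmem // in hv.
      have : fstv v != g.
        apply/negP => /eqP f; move: ev; rewrite /ext f eqxx e vx vy /=.
        by [].
      lia.
    + move=> h.
      have gs : g < size s by have := lst_lt v; lia.
      apply: H2 => //; first lia.
      * rewrite Hmem; lia.
      * rewrite Hmem; lia.
exists lo, hi; split.
- move=> v; rewrite /lo /hi; case: ifP => // _; have := fst_le v; lia.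
- move=> u v uv; rewrite /remove_edge.
  case uy: (u == y).
  + move/eqP: uy => uy; subst u.
    have vy : v != y by rewrite eq_sym.
    have yx : (y == x) = false by rewrite eq_sym (negbTE xy).
    rewrite yx /= (key v vy) /lo /hi eqxx.
    by [].
  case vy: (v == y).
  + move/eqP: vy => vy; subst v.
    have uy' : u != y by rewrite uy.
    have yx : (y == x) = false by rewrite eq_sym (negbTE xy).
    rewrite andbT /= orbF Hsym (key u uy') /lo /hi eqxx uy.
    by rewrite andbC.
  + rewrite !andbF orbF andbT Eover // /lo /hi uy vy.
    have := fst_le u; have := fst_le v.
    case: (ext u); case: (ext v) => /=; lia.
Qed.

End Abstract.

Lemma gap_right (V : finType) (E : rel V) (s : seq {set V}) (x y : V) i :
  (forall u v, E u v = E v u) -> (forall u, ~~ E u u) ->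
  (forall u v, u != v -> E u v = has (fun K : {set V} => (u \in K) && (v \in K)) s) ->
  (forall v, has (fun K : {set V} => v \in K) s) ->
  (forall v i j k, i < j -> j < k -> k < size s ->
    v \in nth set0 s i -> v \in nth set0 s k -> v \in nth set0 s j) ->
  E x y -> i < size s ->
  (forall z, z != y -> z != x -> E y z -> z \in nth set0 s i) ->
  (forall z, z != y -> i.+1 < size s -> z \in nth set0 s i -> z \in nth set0 s i.+1 -> E y z && (z != x)) ->
  interval_edge E x y.
Proof.
move=> Hsym Hirr Hcov Hall Hcon Hxy iS H1 H2.
apply: (@gap_left V E (rev s) x y Hsym Hirr _ _ _ Hxy (size s - i.+1)).
- by move=> u v uv; rewrite has_rev Hcov.
- by move=> v; rewrite has_rev.
- move=> v i' j k ij jk; rewrite size_rev => ks.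
  rewrite !nth_rev; try lia.
  move=> h1 h2; apply: (Hcon v (size s - k.+1) _ (size s - i'.+1)) => //; lia.
- move=> z zy zx e; rewrite nth_rev; last lia.
  have -> : size s - (size s - i.+1).+1 = i by lia.
  exact: H1.
- move=> z zy g0; rewrite !nth_rev; try lia.
  have -> : size s - (size s - i.+1).+1 = i by lia.
  have -> : size s - (size s - i.+1).-1.+1 = i.+1 by lia.
  move=> h1 h2; apply: H2 => //; lia.
Qed.


Section Tree.
Variable V : finType.
Notation mpq := (mpq V).
Notation mpq0 := (mpq0 V).
Notation pos0 := (pos0 V).

Section Ind.
Variable P : mpq -> Prop.
Hypothesis HP : forall X cs, (forall c, List.In c cs -> P c) -> P (PNode X cs).
Hypothesis HQ : forall ps, (forall S c, List.In (S, Some c) ps -> P c) -> P (QNode ps).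

Definition noconf (S S0 : {set V}) (c : mpq) (E : (S0, None) = (S, Some c)) : False :=
  match E in _ = q return match q.2 with Some _ => False | None => True end with
  | erefl => I end.

Fixpoint mpq_ind2 (t : mpq) : P t :=
  match t with
  | PNode X cs => HP X ((fix G (cs : seq mpq) : forall c, List.In c cs -> P c :=
      match cs with
      | [::] => fun c H => False_ind _ H
      | c0 :: cs' => fun c H => match H with
                    | or_introl e => eq_ind c0 P (mpq_ind2 c0) c e
                    | or_intror H' => G cs' c H' end
      end) cs)
  | QNode ps => HQ ((fix G (ps : seq ({set V} * option mpq)) :
                       forall S c, List.In (S, Some c) ps -> P c :=
      match ps with
      | [::] => fun S c H => False_ind _ H
      | q0 :: ps' => fun S c H => match H with
          | or_introl e =>
             (match q0 as q return q = (S, Some c) -> P c with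
              | (S0, Some c0) => fun e => eq_ind c0 P (mpq_ind2 c0) c
                   (f_equal (fun q : {set V} * option mpq => match q.2 with Some c => c | None => c0 end) e)
              | (S0, None) => fun e => False_ind _ (noconf e)
              end) e
          | or_intror H' => G ps' S c H' end
      end) ps)
  end.
End Ind.

Fixpoint cl (d : seq nat) (t : mpq) : {set V} :=
  match d with
  | [::] => match t with PNode X _ => X | QNode _ => set0 end
  | i :: d' => match t with
    | PNode X cs => X :|: (if i < size cs then cl d' (nth mpq0 cs i) else set0)
    | QNode ps => (nth pos0 ps i).1 :|:
                  match (nth pos0 ps i).2 with Some c => cl d' c | None => set0 end
    end
  end.

Definition memAt (t : mpq) (d : seq nat) (j : nat) (v : V) : bool :=
  match subtree t (take j d) with
  | Some (PNode X _) => v \in X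
  | Some (QNode ps) => (j < size d) && (v \in (nth pos0 ps (nth 0 d j)).1)
  | None => false
  end.

Lemma memAt_cons t i d j v :
  memAt t (i :: d) j.+1 v =
  match t with
  | PNode X cs => if i < size cs then memAt (nth mpq0 cs i) d j v else false
  | QNode ps => match (nth pos0 ps i).2 with Some c => memAt c d j v | None => false end
  end.
Proof.
rewrite /memAt /=; case: t => [X cs|ps] /=.
- by case: ifP.
- by case: (nth pos0 ps i).2.
Qed.

Lemma cl_mem d t v : (v \in cl d t) = [exists j : 'I_(size d).+1, memAt t d j v].
Proof.
elim: d t => [|i d IH] t.
- apply/idP/existsP.
  + move=> h; exists ord0; rewrite /memAt /=; by case: t h => [X cs|ps] //=; rewrite inE.
  + case=> j; rewrite /memAt (ord1 j) /=; by case: t => //=.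
- apply/idP/existsP.
  + case: t => [X cs|ps] /=; rewrite inE => /orP[h|h].
    * by exists ord0; rewrite /memAt.
    * move: h; case: ifP => ics; last by rewrite inE. rewrite IH => /existsP[j hj].
      exists (lift ord0 j); rewrite /= memAt_cons /= ics //.
    * exists ord0; by rewrite /memAt /= h.
    * move: h; case e: (nth pos0 ps i).2 => [c|]; last by rewrite inE. rewrite IH => /existsP[j hj].
      exists (lift ord0 j); by rewrite /= memAt_cons /= e.
  + case=> j; case: t => [X cs|ps] /=; case: (unliftP ord0 j) => [j'|] ->.
    * rewrite /= memAt_cons; case: ifP => // ics h.
      by rewrite inE IH; apply/orP; right; apply/existsP; exists j'.
    * by rewrite /memAt /= inE => ->.
    * rewrite /= memAt_cons; case e: (nth pos0 ps i).2 => [c|] // h.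
      by rewrite inE IH; apply/orP; right; apply/existsP; exists j'.
    * by rewrite /memAt /= inE => ->.
Qed.


Fixpoint descl (f : mpq -> seq (seq nat)) (n : nat) (cs : seq mpq) : seq (seq nat) :=
  match cs with
  | [::] => [::]
  | c :: cs' => map (cons n) (f c) ++ descl f n.+1 cs'
  end.

Definition optdesc (f : mpq -> seq (seq nat)) (o : option mpq) : seq (seq nat) :=
  match o with Some c => f c | None => [:: [::]] end.

Fixpoint descq (f : mpq -> seq (seq nat)) (n : nat) (ps : seq ({set V} * option mpq)) :=
  match ps with
  | [::] => [::]
  | q :: ps' => map (cons n) (optdesc f q.2) ++ descq f n.+1 ps'
  end.

Fixpoint descents (t : mpq) : seq (seq nat) :=
  match t with
  | PNode X cs => if cs is [::] then [:: [::]] else descl descents 0 cs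
  | QNode ps => descq descents 0 ps
  end.

Lemma cliques_cl t : cliques t = map (fun d => cl d t) (descents t).
Proof.
elim/mpq_ind2: t => [X cs IH|ps IH].
- case: cs IH => [|c0 cs0] IH //.
  have gen : forall cs0 cs1, (forall c, List.In c cs1 -> cliques c = map (fun d => cl d c) (descents c)) ->
     map (fun d => cl d (PNode X (cs0 ++ cs1))) (descl descents (size cs0) cs1) =
     flatten (map (fun c => map (setU X) (cliques c)) cs1).
    clear IH; move=> cs2 cs1; elim: cs1 cs2 => [|c cs1 IH1] cs2 //= H.
    rewrite map_cat -map_comp (H c (or_introl erefl)) -map_comp.
    have -> : (size cs2).+1 = size (rcons cs2 c) by rewrite size_rcons.
    rewrite -(IH1 (rcons cs2 c)); last by move=> c' h; apply: H; right.
    rewrite cat_rcons; congr (_ ++ _); apply: eq_map => d /=.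
    rewrite size_cat /= nth_cat ltnn subnn /=.
    by have -> : (size cs2 < size cs2 + (size cs1).+1) = true by lia.
  symmetry; exact (gen [::] (c0 :: cs0) IH).
- rewrite /=.
  have gen : forall ps0 ps1, (forall S c, List.In (S, Some c) ps1 -> cliques c = map (fun d => cl d c) (descents c)) ->
     map (fun d => cl d (QNode (ps0 ++ ps1))) (descq descents (size ps0) ps1) =
     flatten (map (fun q => match q.2 with None => [:: q.1] | Some c => map (setU q.1) (cliques c) end) ps1).
    move=> {IH} ps0 ps1; elim: ps1 ps0 => [|[S o] ps1 IH1] ps0 //= H.
    rewrite map_cat.
    have -> : (size ps0).+1 = size (rcons ps0 (S, o)) by rewrite size_rcons.
    rewrite -(IH1 (rcons ps0 (S, o))); last by move=> S' c' h; apply: (H S'); right.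
    rewrite cat_rcons; congr (_ ++ _).
    case: o H => [c|] H /=.
    + rewrite (H S c (or_introl erefl)) -!map_comp; apply: eq_map => d /=.
      by rewrite nth_cat ltnn subnn.
    + by rewrite nth_cat ltnn subnn /= setU0.
  symmetry; exact (gen [::] ps IH).
Qed.


Fixpoint ltlex (u v : seq nat) : bool :=
  match u, v with
  | a :: u', b :: v' => (a < b) || ((a == b) && ltlex u' v')
  | _, _ => false
  end.

Lemma ltlex_nth n u v : ltlex u v -> take n u = take n v -> n < size u -> n < size v ->
  nth 0 u n <= nth 0 v n.
Proof.
elim: n u v => [|n IH] [|a u] [|b v] //=.
- by case/orP => [/ltnW|/andP[/eqP ->]].
- move=> h [e1 e2] s1 s2; move: h; rewrite e1 ltnn eqxx /= => h; exact: IH.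
Qed.

Lemma descl_head f m cs d : d \in descl f m cs -> m <= head 0 d.
Proof.
elim: cs m => [|c cs IH] m //=; rewrite mem_cat => /orP[/mapP[e _ ->] //|h].
by have := IH _ h; lia.
Qed.

Lemma descq_head f m ps d : d \in descq f m ps -> m <= head 0 d.
Proof.
elim: ps m => [|q ps IH] m //=; rewrite mem_cat => /orP[/mapP[e _ ->] //|h].
by have := IH _ h; lia.
Qed.

Lemma pairwise_cons n s : pairwise ltlex (map (cons n) s) = pairwise ltlex s.
Proof.
rewrite pairwise_map; apply: eq_pairwise => u v /=; by rewrite ltnn eqxx.
Qed.

Lemma allrel_head n s1 s2 : (forall d, d \in s2 -> n < head 0 d /\ 0 < size d) ->
  allrel ltlex (map (cons n) s1) s2.
Proof.
move=> H; apply/allrelP => u v /mapP[e _ ->] /H; case: v => [|b v] [h1 h2] //=.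
by rewrite h1.
Qed.

Lemma desc_size t d : d \in descents t -> 0 < size d \/ d = [::].
Proof. by case: d => [|? ?] _; [right|left]. Qed.

Lemma descl_size f m cs d : d \in descl f m cs -> 0 < size d.
Proof.
elim: cs m => [|c cs IH] m //=; rewrite mem_cat => /orP[/mapP[e _ ->] //|h]; exact: IH h.
Qed.

Lemma descq_size f m ps d : d \in descq f m ps -> 0 < size d.
Proof.
elim: ps m => [|q ps IH] m //=; rewrite mem_cat => /orP[/mapP[e _ ->] //|h]; exact: IH h.
Qed.

Lemma descents_sorted t : pairwise ltlex (descents t).
Proof.
elim/mpq_ind2: t => [X cs IH|ps IH].
- case: cs IH => [|c0 cs0] IH //.
  have gen : forall n cs1, (forall c, List.In c cs1 -> pairwise ltlex (descents c)) ->
     pairwise ltlex (descl descents n cs1).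
    move=> n cs1; elim: cs1 n => [|c cs1 IH1] n //= H.
    rewrite pairwise_cat pairwise_cons H /=; last by left.
    rewrite IH1; last by move=> c' h; apply: H; right.
    rewrite andbT; apply: allrel_head => d h; split.
    + by have := descl_head h; lia.
    + exact: descl_size h.
  exact (gen 0 (c0 :: cs0) IH).
- have gen : forall n ps1, (forall S c, List.In (S, Some c) ps1 -> pairwise ltlex (descents c)) ->
     pairwise ltlex (descq descents n ps1).
    move=> n ps1; elim: ps1 n => [|[S o] ps1 IH1] n //= H.
    rewrite pairwise_cat pairwise_cons.
    rewrite IH1; last by move=> S' c' h; apply: (H S'); right.
    rewrite andbT; apply/andP; split.
    + apply: allrel_head => d h; split.
      * by have := descq_head h; lia.
      * exact: descq_size h.
    + case: o H => [c|] H /=; last by [].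
      exact: (H S c (or_introl erefl)).
  exact (gen 0 ps IH).
Qed.


Lemma subtree_cat (t : mpq) (p q : seq nat) : subtree t (p ++ q) =
  match subtree t p with Some t' => subtree t' q | None => None end.
Proof.
elim: p t => [|i p IH] t //=.
case: t => [X cs|ps] /=.
- by case: ifP.
- by case: (nth pos0 ps i).2.
Qed.

Lemma In_nth' (T : Type) (x0 : T) (s : seq T) i : i < size s -> List.In (nth x0 s i) s.
Proof. elim: s i => [|a s IH] [|i] //= h; [by left|right; exact: IH]. Qed.

Lemma descl_mem f n cs i e : i < size cs -> e \in f (nth mpq0 cs i) -> (n + i) :: e \in descl f n cs.
Proof.
elim: cs n i => [|c cs IH] n [|i] //= h he; rewrite mem_cat.
- by rewrite addn0 map_f.
- by rewrite -addSnnS IH ?orbT.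
Qed.

Lemma descq_mem f n ps i e : i < size ps -> e \in optdesc f (nth pos0 ps i).2 -> (n + i) :: e \in descq f n ps.
Proof.
elim: ps n i => [|c ps IH] n [|i] //= h he; rewrite mem_cat.
- by rewrite addn0 map_f.
- by rewrite -addSnnS IH ?orbT.
Qed.

Lemma desc_sub T p t d : subtree T p = Some t -> d \in descents t -> p ++ d \in descents T.
Proof.
elim: p T => [|i p IH] T /=; first by case=> ->.
case: T => [X cs|ps].
- case: ifP => // ics st hd.
  have := IH _ st hd => h.
  case: cs ics st h => [|c0 cs0] //= ics st h.
  by have := @descl_mem descents 0 (c0 :: cs0) i _ ics h.
- case e: (nth pos0 ps i).2 => [c|] // st hd.
  have ips : i < size ps by rewrite ltnNge; apply/negP => h; move: e; rewrite nth_default.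
  apply: (@descq_mem descents 0 ps i) => //; rewrite e /=; exact: IH st hd.
Qed.

Definition Qnonempty (t : mpq) := forall q ps, subtree t q = Some (QNode ps) -> 0 < size ps.

Lemma desc_nonempty t : Qnonempty t -> descents t != [::].
Proof.
elim/mpq_ind2: t => [X [|c0 cs0] IH|ps IH] H //=.
- have : descents c0 != [::].
    apply: IH; first by left.
    by move=> q ps hq; apply: (H (0 :: q)).
  by case: (descents c0).
- have := H [::] ps erefl; case: ps IH H => [|[S o] ps] //= IH H _.
  case: o IH H => [c|] //= IH H.
  have : descents c != [::].
    apply: (IH S); first by left.
    by move=> q ps' hq; apply: (H (0 :: q)).
  by case: (descents c).
Qed.

Lemma exists_desc T px ps b : subtree T px = Some (QNode ps) -> 0 < b <= size ps -> Qnonempty T ->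
  exists d, d \in descents T /\ take (size px).+1 d = rcons px b.-1.
Proof.
move=> st hb HQ.
have ips : b.-1 < size ps by lia.
have [e he] : exists e, e \in optdesc descents (nth pos0 ps b.-1).2.
  case eo: (nth pos0 ps b.-1).2 => [c|] /=; last by exists [::]; rewrite inE.
  have : descents c != [::].
    apply: desc_nonempty => q ps' hq; apply: (HQ (px ++ b.-1 :: q)).
    by rewrite subtree_cat st /= eo.
  case: (descents c) => [|e ?] // _; exists e; by rewrite inE eqxx.
exists (px ++ b.-1 :: e); split.
- apply: (desc_sub st); exact: (@descq_mem descents 0 ps b.-1 e ips he).
- rewrite take_cat; have -> : ((size px).+1 < size px) = false by lia.
  by rewrite subSnn /= take0 cats1.
Qed.

Lemma reorder_refl (t : mpq) : reorder t t.
Proof.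
elim/mpq_ind2: t => [X cs IH|ps IH].
- apply (@ReorderP V X cs cs (iota 0 (size cs))); [by []|by []|move=> i ics].
  rewrite nth_iota // add0n; apply: IH; exact: In_nth'.
- apply (@ReorderQ V ps ps false); [by []|move=> i ips; split; first by []].
  case e: (nth pos0 ps i).2 => [c|]; [right|left] => //.
  exists c, c; split => //; split => //; apply: (IH (nth pos0 ps i).1).
  by rewrite -e -surjective_pairing; apply: In_nth'.
Qed.

End Tree.


Section Main.
Variables (V : finType) (E : rel V) (T : mpq V) (x y : V) (px py : seq nat)
  (ps : seq ({set V} * option (mpq V))) (a : nat).
Hypothesis Hsg : simple_graph E.
Hypothesis Hmpq : mpq_tree E T.
Hypothesis Exy : E x y.
Hypothesis Hnx : node_at T x px.
Hypothesis Hny : node_at T y py.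
Hypothesis Hpre : prefix px py.
Hypothesis Hne : px != py.
Hypothesis Halm : almost_rotable T px py.
Hypothesis Hstart : starts_in_central T x px py ps a.
Hypothesis HVa : forall z, z \in Vsub ps a -> z != y -> ~~ E y z.

Notation D := (descents T).
Notation s := (cliques T).

Lemma cliqueT K : K \in s -> clique E K.
Proof. case: Hmpq => _ [_ [[_ Hm] _]]; by rewrite -Hm => /andP[]. Qed.

Lemma extT C : clique E C -> exists2 K, K \in s & C \subset K.
Proof.
move=> hC; case: Hmpq => _ [_ [[_ Hm] _]].
pose P := fun K : {set V} => clique E K && (C \subset K).
have P0 : P C by rewrite /P hC subxx.
case: (@arg_maxnP _ C P (fun K : {set V} => #|K|) P0) => K /andP[cK sK] mK.
exists K => //; rewrite -Hm /maxclique cK /=; apply/forallP => K'; apply/implyP => /andP[cK' sKK'].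
have : #|K'| <= #|K| by apply: mK; rewrite /P cK' (subset_trans sK sKK').
move=> le; rewrite eq_sym eqEcard sKK' //.
Qed.

Lemma HcovT u v : u != v -> E u v = has (fun K : {set V} => (u \in K) && (v \in K)) s.
Proof.
move=> uv; apply/idP/idP.
- move=> e.
  have c2 : clique E [set u; v].
    apply/forallP => w; apply/implyP => hw; apply/forallP => w'; apply/implyP => hw'; apply/implyP => ww'.
    case: Hsg => hs _.
    move: hw hw' ww'; rewrite !inE => /orP[]/eqP-> /orP[]/eqP->; rewrite ?eqxx //= => _.
    by rewrite hs.
  case: (extT c2) => K hK sK; apply/hasP; exists K => //.
  by rewrite !(subsetP sK) // !inE eqxx ?orbT.
- case/hasP => K /cliqueT cK /andP[hu hv].
  by move/forallP: cK => /(_ u); rewrite hu /= => /forallP/(_ v); rewrite hv uv.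
Qed.

Lemma HallT v : has (fun K : {set V} => v \in K) s.
Proof.
have c1 : clique E [set v].
  by apply/forallP => w; apply/implyP; rewrite inE => /eqP->; apply/forallP => w'; apply/implyP; rewrite inE => /eqP->; rewrite eqxx.
case: (extT c1) => K hK sK; apply/hasP; exists K => //; by rewrite (subsetP sK) // inE.
Qed.

Lemma HconT : forall v i j k, i < j -> j < k -> k < size s ->
    v \in nth set0 s i -> v \in nth set0 s k -> v \in nth set0 s j.
Proof.
case: Hmpq => _ [_ [_ [Hord _]]].
have : consecutive_clique_order E s by apply/Hord; exists T; split => //; exact: reorder_refl.
by case=> _ [_ H].
Qed.


Lemma nodeU v p p' : node_at T v p -> node_at T v p' -> p = p'.
Proof. case: Hmpq => Hu _; case: (Hu v) => p0 [_ H] h1 h2; by rewrite -(H _ h1) -(H _ h2). Qed.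

Lemma memAt_node d j v : memAt T d j v -> node_at T v (take j d).
Proof.
rewrite /memAt; case e: subtree => [[X cs|ps']|] //.
- by move=> h; exists (PNode X cs); split.
- case/andP => _ h; exists (QNode ps'); split => //=.
  apply/(has_nthP (pos0 V)); exists (nth 0 d j) => //.
  by rewrite ltnNge; apply/negP => hh; move: h; rewrite nth_default // inE.
Qed.

Lemma KL d v p : v \in cl d T -> node_at T v p ->
  [/\ size p <= size d, take (size p) d = p & memAt T d (size p) v].
Proof.
rewrite cl_mem => /existsP[j hj] hn.
have ep := nodeU (memAt_node hj) hn.
have jd : j <= size d by have := ltn_ord j.
have sp : size p = j by rewrite -ep size_takel.
by rewrite sp.
Qed.

Lemma KR d j v : j <= size d -> memAt T d j v -> v \in cl d T.
Proof. by move=> jd h; rewrite cl_mem; apply/existsP; exists (Ordinal (jd : j < (size d).+1)). Qed.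

Lemma memAt_eq d d' j v : take j.+1 d = take j.+1 d' -> j < size d -> j < size d' ->
  memAt T d j v = memAt T d' j v.
Proof.
move=> e jd jd'.
have e1 : take j d = take j d'.
  by rewrite -(take_takel d (leqnSn j)) e take_takel.
have e2 : nth 0 d j = nth 0 d' j by rewrite -(nth_take 0 (ltnSn j) d) e nth_take.
rewrite /memAt e1 e2; case: subtree => // -[] // ps'; by rewrite jd jd'.
Qed.

Lemma allvP_X (X : {set V}) (cs : seq (mpq V)) (v : V) : v \in X -> v \in allv (PNode X cs).
Proof. by elim: cs => [|c cs IH] //= h; rewrite inE IH ?orbT. Qed.

Lemma allvP_c (X : {set V}) (cs : seq (mpq V)) i (v : V) : i < size cs -> v \in allv (nth (mpq0 V) cs i) -> v \in allv (PNode X cs).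
Proof.
elim: cs i => [|c cs IH] [|i] //= h hv; rewrite inE ?hv //.
by rewrite (IH i) ?orbT.
Qed.

Lemma allvQ_S (ps' : seq ({set V} * option (mpq V))) i v :
  v \in (nth (pos0 V) ps' i).1 -> v \in allv (QNode ps').
Proof.
elim: ps' i => [|q ps' IH] [|i] //=; rewrite ?inE => h.
- by rewrite h.
- by rewrite (IH i h) !orbT.
Qed.

Lemma allvQ_c (ps' : seq ({set V} * option (mpq V))) i c (v : V) :
  (nth (pos0 V) ps' i).2 = Some c -> v \in allv c -> v \in allv (QNode ps').
Proof.
elim: ps' i => [|q ps' IH] [|i] //= e h; rewrite !inE.
- by rewrite e h orbT.
- by rewrite (IH i e h) !orbT.
Qed.

Lemma allv_sub (c : mpq V) q t (v : V) : subtree c q = Some t -> in_node v t -> v \in allv c.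
Proof.
elim: q c => [|i q IH] c /=.
- case=> ->; case: t => [X cs|ps'] /= h; first exact: allvP_X.
  by case/(has_nthP (pos0 V)): h => k _ hk; apply: allvQ_S hk.
- case: c => [X cs|ps'].
  + case: ifP => // ics st hn; apply: (allvP_c X ics); exact: IH st hn.
  + case e: (nth (pos0 V) ps' i).2 => [c|] // st hn; apply: (allvQ_c e); exact: IH st hn.
Qed.


Lemma Hpx : subtree T px = Some (QNode ps).
Proof. by case: Hstart. Qed.

Lemma rc_facts d c : take (size px).+1 d = rcons px c ->
  [/\ size px < size d, take (size px) d = px, nth 0 d (size px) = c &
      forall m, m <= size px -> take m d = take m px].
Proof.
move=> e.
have sd : size px < size d.
  have := congr1 size e; rewrite size_rcons size_take; case: ifP => //; lia.
have tn : take (size px) d = px.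
  by rewrite -(take_takel d (leqnSn (size px))) e -cats1 takel_cat // take_size.
split => //.
- by rewrite -(nth_take 0 (ltnSn (size px)) d) e nth_rcons ltnn eqxx.
- move=> m hm; by rewrite -tn take_takel.
Qed.

Lemma py_facts : [/\ size px < size py, take (size px) py = px, a = (nth 0 py (size px)).+1 &
  take (size px).+1 py = rcons px a.-1].
Proof.
have ha : a = (nth 0 py (size px)).+1 by case: Hstart.
move: Hpre; rewrite prefixE => /eqP tp.
have sp : size px < size py.
  have : size px <= size py by rewrite -{1}tp size_take; case: ifP => h; lia.
  rewrite leq_eqVlt => /orP[/eqP e|//].
  by move: Hne; rewrite -tp e take_size eqxx.
split => //.
by rewrite (take_nth 0 sp) tp ha.
Qed.

Lemma y_leaf : exists X, subtree T py = Some (PNode X [::]).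
Proof. by case: Halm. Qed.

Lemma dy_exists : exists2 dy, dy \in D & y \in cl dy T.
Proof.
case/hasP: (HallT y) => K; rewrite cliques_cl => /mapP[dy hd ->] h; by exists dy.
Qed.

Lemma z_short d z pz : y \in cl d T -> z \in cl d T -> node_at T z pz -> size pz <= size py.
Proof.
move=> hy hz hn.
case: (KL hy Hny) => sy ty _.
case: (KL hz hn) => sz tz mz.
rewrite leqNgt; apply/negP => lt.
have := memAt_node mz; rewrite /node_at.
case: y_leaf => X st.
have e : take (size pz) d = py ++ drop (size py) (take (size pz) d).
  by rewrite -{1}(cat_take_drop (size py) (take (size pz) d)) take_takel ?ty //; lia.
rewrite e subtree_cat st.
case ed: (drop (size py) (take (size pz) d)) => [|i q].
- have := congr1 size ed; rewrite size_drop size_takel //=; lia.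
- by case=> t [].
Qed.

Lemma secE z : z \in sec ps a -> z != y -> E y z.
Proof.
move=> hz zy.
case: dy_exists => dy hd hy.
case: (KL hy Hny) => sy ty _.
case: py_facts => spx tpx ha tpx1.
have : take (size px).+1 dy = rcons px a.-1.
  by rewrite -(take_takel dy (spx : (size px).+1 <= size py)) ty tpx1.
case/rc_facts => sd tdx ndx _.
have zin : z \in cl dy T.
  apply: (@KR dy (size px)); first lia.
  by rewrite /memAt tdx Hpx sd ndx.
have := cliqueT (_ : cl dy T \in s); rewrite cliques_cl => /(_ (map_f _ hd)).
move/forallP/(_ y); rewrite hy /= => /forallP/(_ z); rewrite zin /= eq_sym zy.
by [].
Qed.

Lemma anc z pz d : node_at T z pz -> size pz < size px -> z \in cl d T ->
  take (size pz).+1 d = take (size pz).+1 px -> z != y -> E y z && (z != x).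
Proof.
move=> hn sp hz td zy.
case: (KL hz hn) => sz tz mz.
case: dy_exists => dy hd hy.
case: (KL hy Hny) => sy ty _.
case: py_facts => spx tpx ha tpx1.
have : take (size px).+1 dy = rcons px a.-1.
  by rewrite -(take_takel dy (spx : (size px).+1 <= size py)) ty tpx1.
case/rc_facts => sd tdx ndx tdm.
have sdz : size pz < size d.
  have := congr1 size td; rewrite !size_take_min; lia.
have zin : z \in cl dy T.
  apply: (@KR dy (size pz)); first lia.
  rewrite (@memAt_eq dy d) //; last lia.
  by rewrite td tdm.
apply/andP; split.
- have := cliqueT (_ : cl dy T \in s); rewrite cliques_cl => /(_ (map_f _ hd)).
  move/forallP/(_ y); rewrite hy /= => /forallP/(_ z); rewrite zin /= eq_sym zy.
  by [].
- apply/negP => /eqP ezx; subst z.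
  by have := nodeU hn Hnx => e; move: sp; rewrite e ltnn.
Qed.


Lemma ex_node z : exists pz, node_at T z pz.
Proof. case: Hmpq => Hu _; case: (Hu z) => p [h _]; by exists p. Qed.

Lemma H1gen b Di : 0 < b <= size ps -> take (size px).+1 Di = rcons px b.-1 ->
  sec ps a :\ x \subset sec ps b ->
  forall z, z != y -> z != x -> E y z -> z \in cl Di T.
Proof.
move=> hb tDi hsub z zy zx e0; have e := e0.
case: (rc_facts tDi) => sDi tDix nDi tDim.
case: py_facts => spx tpx ha tpx1.
have yz : y != z by rewrite eq_sym.
move: e; rewrite (HcovT yz) => /hasP[K]; rewrite cliques_cl => /mapP[d hd ->] /andP[hy hz].
case: (ex_node z) => pz hn.
case: (KL hy Hny) => sy ty _.
case: (KL hz hn) => sz tz mz.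
have spz := z_short hy hz hn.
have tzp : take (size pz) py = pz by rewrite -ty take_takel.
case: (ltngtP (size pz) (size px)) => c.
- apply: (@KR Di (size pz)); first by clear -c sDi; lia.
  have e1 : take (size pz).+1 d = take (size pz).+1 Di.
    rewrite tDim; last by clear -c; lia.
    rewrite -(take_takel d (_ : (size pz).+1 <= size py)); last by clear -c spx; lia.
    rewrite ty -(take_takel py (_ : (size pz).+1 <= (size px).+1)); last by clear -c; lia.
    by rewrite tpx1 -cats1 takel_cat.
  rewrite -(memAt_eq _ e1) //; clear -c spx sy sDi; lia.
- exfalso.
  have tpz : take (size px).+1 pz = rcons px a.-1.
    by rewrite -tzp take_takel // tpx1.
  set q := drop (size px).+1 pz.
  have eq : pz = px ++ a.-1 :: q.
    by rewrite -{1}(cat_take_drop (size px).+1 pz) tpz -cats1 -catA.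
  case: hn => t [st hin].
  move: st; rewrite eq subtree_cat Hpx /=.
  have := @HVa z; rewrite /Vsub.
  case: (nth (pos0 V) ps a.-1).2 => [c'|] //= hva st.
  by move: (hva (allv_sub st hin) zy); rewrite e0.
- have pzx : pz = px by rewrite -tzp c tpx.
  have zsa : z \in sec ps a.
    have tdx : take (size px) d = px by rewrite -pzx.
    move: mz; rewrite /memAt pzx tdx Hpx /sec ha /= => /andP[_].
    by rewrite -(nth_take 0 spx) ty.
  have zsb : z \in sec ps b by apply: (subsetP hsub); rewrite !inE zx.
  apply: (@KR Di (size px)); first by clear -sDi; lia.
  by rewrite /memAt tDix Hpx sDi nDi.
Qed.


Lemma charz z i : node_at T z px -> 1 <= i <= size ps ->
  (z \in sec ps i) = (lpos z ps <= i <= rpos z ps).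
Proof.
case=> t [st hin] hi.
move: st; rewrite Hpx => -[et]; subst t.
case: Hmpq => _ [Hlr _].
by case: (Hlr z px ps Hpx hin) => _ ->.
Qed.

Lemma sec_between z i j k : node_at T z px -> 1 <= i -> i <= j <= k -> k <= size ps ->
  z \in sec ps i -> z \in sec ps k -> z \in sec ps j.
Proof.
move=> hn i1 /andP[ij jk] ks.
rewrite !(charz hn); try (apply/andP; split); try (clear -i1 ij jk ks; lia).
Qed.

Lemma Qne : Qnonempty T.
Proof.
move=> q ps' st; case: Hmpq => _ [_ [_ [_ [HQ _]]]].
by case: (HQ _ _ st) => h _; clear -h; lia.
Qed.

Lemma nths k : k < size D -> nth set0 s k = cl (nth [::] D k) T.
Proof. by move=> kD; rewrite cliques_cl (nth_map [::]). Qed.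

Lemma H2left b Di D' : 0 < b <= size ps -> b <= lpos x ps ->
  (1 < b -> sec ps b.-1 :&: sec ps b \subset sec ps a) ->
  take (size px).+1 Di = rcons px b.-1 -> take (size px).+1 D' != rcons px b.-1 -> ltlex D' Di ->
  forall z, z != y -> z \in cl D' T -> z \in cl Di T -> E y z && (z != x).
Proof.
move=> hb hbl hint tDi nP lt z zy hz' hz.
case: (rc_facts tDi) => sDi tDix nDi tDim.
case: (ex_node z) => pz hn.
case: (KL hz' hn) => s1 t1 m1.
case: (KL hz hn) => s2 t2 m2.
case: (ltngtP (size pz) (size px)) => c.
- apply: (anc hn c hz) => //; apply: tDim; clear -c; lia.
- exfalso; move/negP: nP; apply; apply/eqP.
  rewrite -(take_takel D' (c : (size px).+1 <= size pz)) t1.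
  by rewrite -t2 take_takel.
- have pzx : pz = px by rewrite -t2 c tDix.
  have td' : take (size px) D' = px by rewrite -c t1.
  move: m1; rewrite /memAt c td' Hpx => /andP[sD' hz1].
  set cc := nth 0 D' (size px) in hz1.
  have le : cc <= b.-1 by rewrite -nDi; apply: ltlex_nth => //; rewrite td' tDix.
  have ne : cc != b.-1.
    apply/negP => /eqP ecc; move/negP: nP; apply; apply/eqP.
    by rewrite (take_nth 0 sD') td' -/cc ecc.
  have ccb : cc.+1 < b by clear -le ne hb; lia.
  have ccs : cc < size ps.
    by rewrite ltnNge; apply/negP => hh; move: hz1; rewrite nth_default // inE.
  have zb : z \in sec ps b by move: m2; rewrite /memAt c tDix Hpx sDi nDi andTb.
  rewrite pzx in hn.
  have zb1 : z \in sec ps b.-1.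
    apply: (sec_between (i := cc.+1) (k := b)) hn _ _ _ _ zb => //.
    + by apply/andP; split; clear -ccb; lia.
    + by case/andP: hb.
  have za : z \in sec ps a.
    by apply: (subsetP (hint (leq_ltn_trans (ltn0Sn cc) ccb))); rewrite inE zb1 zb.
  rewrite (secE za zy) /=; apply/negP => /eqP ezx; subst z.
  move: zb1; rewrite (charz Hnx); last by apply/andP; split; clear -ccb hb; lia.
  by case/andP => h _; clear -h hbl ccb; lia.
Qed.

Lemma H2right b Di D' : 0 < b <= size ps -> rpos x ps <= b ->
  (b < size ps -> sec ps b :&: sec ps b.+1 \subset sec ps a) ->
  take (size px).+1 Di = rcons px b.-1 -> take (size px).+1 D' != rcons px b.-1 -> ltlex Di D' ->
  forall z, z != y -> z \in cl Di T -> z \in cl D' T -> E y z && (z != x).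
Proof.
move=> hb hbr hint tDi nP lt z zy hz hz'.
case: (rc_facts tDi) => sDi tDix nDi tDim.
case: (ex_node z) => pz hn.
case: (KL hz' hn) => s1 t1 m1.
case: (KL hz hn) => s2 t2 m2.
case: (ltngtP (size pz) (size px)) => c.
- apply: (anc hn c hz) => //; apply: tDim; clear -c; lia.
- exfalso; move/negP: nP; apply; apply/eqP.
  rewrite -(take_takel D' (c : (size px).+1 <= size pz)) t1.
  by rewrite -t2 take_takel.
- have pzx : pz = px by rewrite -t2 c tDix.
  have td' : take (size px) D' = px by rewrite -c t1.
  move: m1; rewrite /memAt c td' Hpx => /andP[sD' hz1].
  set cc := nth 0 D' (size px) in hz1.
  have le : b.-1 <= cc by rewrite -nDi; apply: ltlex_nth => //; rewrite td' tDix.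
  have ne : cc != b.-1.
    apply/negP => /eqP ecc; move/negP: nP; apply; apply/eqP.
    by rewrite (take_nth 0 sD') td' -/cc ecc.
  have ccb : b <= cc by clear -le ne hb; lia.
  have ccs : cc < size ps.
    by rewrite ltnNge; apply/negP => hh; move: hz1; rewrite nth_default // inE.
  have zb : z \in sec ps b by move: m2; rewrite /memAt c tDix Hpx sDi nDi andTb.
  rewrite pzx in hn.
  have zb1 : z \in sec ps b.+1.
    apply: (sec_between (i := b) (k := cc.+1)) hn _ _ _ zb _ => //.
    + by case/andP: hb.
    + by apply/andP; split; clear -ccb; lia.
  have za : z \in sec ps a.
    by apply: (subsetP (hint (leq_ltn_trans ccb ccs))); rewrite inE zb1 zb.
  rewrite (secE za zy) /=; apply/negP => /eqP ezx; subst z.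
  move: zb1; rewrite (charz Hnx); last by apply/andP; split; clear -ccb ccs; lia.
  by case/andP => _ h; clear -h hbr; lia.
Qed.

Lemma left_case b : 0 < b <= size ps -> b <= lpos x ps -> sec ps a :\ x \subset sec ps b ->
  (1 < b -> sec ps b.-1 :&: sec ps b \subset sec ps a) -> interval_edge E x y.
Proof.
move=> hb hbl hsub hint.
case: (exists_desc Hpx hb Qne) => d0 [d0D Pd0].
pose P := fun d : seq nat => take (size px).+1 d == rcons px b.-1.
have hP : has P D by apply/hasP; exists d0 => //; rewrite /P Pd0.
set i := find P D.
have iD : i < size D by rewrite /i -has_find.
have PDi : P (nth [::] D i) := nth_find [::] hP.
case: Hsg => Hsym Hirr.
apply: (@gap_left V E s x y Hsym Hirr HcovT HallT HconT Exy i).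
- move=> z zy zx e; rewrite nths //.
  by apply: (H1gen hb (eqP PDi) hsub).
- move=> z zy i0.
  have i1D : i.-1 < size D by clear -iD; lia.
  rewrite !nths //.
  apply: (H2left hb hbl hint (eqP PDi)).
  + have hb' : i.-1 < i by clear -i0; lia.
    by move: (before_find [::] hb'); rewrite /P => ->.
  + move/pairwiseP: (descents_sorted T) => H; apply: H; rewrite ?inE; clear -iD i0; lia.
  by [].
Qed.

Lemma last_ex (A : Type) (x0 : A) (P : pred A) (l : seq A) i0 :
  P (nth x0 l i0) -> ~~ P x0 -> exists i, P (nth x0 l i) && ~~ P (nth x0 l i.+1).
Proof.
move=> h0 nx.
move Hk: (size l - i0) => k; elim: k i0 Hk h0 => [|k IH] i0 Hk h0.
- by move: h0; rewrite nth_default ?(negbTE nx) //; clear -Hk; lia.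
- case h1: (P (nth x0 l i0.+1)).
  + apply: (IH i0.+1) => //; clear -Hk; lia.
  + by exists i0; rewrite h0 h1.
Qed.

Lemma right_case b : 0 < b <= size ps -> rpos x ps <= b -> sec ps a :\ x \subset sec ps b ->
  (b < size ps -> sec ps b :&: sec ps b.+1 \subset sec ps a) -> interval_edge E x y.
Proof.
move=> hb hbr hsub hint.
case: (exists_desc Hpx hb Qne) => d0 [d0D Pd0].
pose P := fun d : seq nat => take (size px).+1 d == rcons px b.-1.
have [i0 i0s i0D] : exists2 i0, i0 < size D & nth [::] D i0 = d0.
  by exists (index d0 D); [rewrite index_mem | rewrite nth_index].
have : P (nth [::] D i0) by rewrite i0D /P Pd0.
have nP0 : ~~ P [::] by rewrite /P /=; case: (px).
move/(last_ex (P := P)) => /(_ nP0) [i /andP[PDi nP]].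
have iD : i < size D.
  rewrite ltnNge; apply/negP => hh; move: PDi; rewrite nth_default //.
  by move/negP: nP0.
case: Hsg => Hsym Hirr.
have GR := @gap_right V E s x y i Hsym Hirr HcovT HallT HconT Exy.
apply: GR.
- by rewrite cliques_cl size_map.
- move=> z zy zx e; rewrite nths //.
  by apply: (H1gen hb (eqP PDi) hsub).
- move=> z zy i1; rewrite cliques_cl size_map in i1; rewrite !nths //.
  apply: (H2right hb hbr hint (eqP PDi)) => //.
  move/pairwiseP: (descents_sorted T) => H; apply: H; rewrite ?inE; clear -iD i1; lia.
Qed.


Lemma main_sec :
  [\/ exists b, [/\ 1 < b <= lpos x ps, sec ps a :\ x \subset sec ps b &
                     sec ps b.-1 :&: sec ps b \subset sec ps a],
      exists b, [/\ rpos x ps <= b < size ps, sec ps a :\ x \subset sec ps b &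
                     sec ps b :&: sec ps b.+1 \subset sec ps a],
      sec ps a :\ x \subset sec ps 1 |
      sec ps a :\ x \subset sec ps (size ps)] ->
  interval_edge E x y.
Proof.
have hin : in_node x (QNode ps).
  by case: Hnx => t [st h]; move: st h; rewrite Hpx => -[<-].
have lr : lpos x ps < rpos x ps.
  by case: Hmpq => _ [Hlr _]; case: (Hlr x px ps Hpx hin).
have ls : lpos x ps <= size ps by rewrite /lpos -has_find.
have rs : rpos x ps <= size ps by rewrite /rpos leq_subr.
case.
- case=> b [/andP[h1 h2] hs hi].
  have hb : 0 < b <= size ps by apply/andP; split; clear -h1 h2 ls; lia.
  exact: (left_case hb h2 hs (fun _ => hi)).
- case=> b [/andP[h1 h2] hs hi].
  have hb : 0 < b <= size ps by apply/andP; split; clear -h1 h2 lr; lia.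
  exact: (right_case hb h1 hs (fun _ => hi)).
- move=> hs; apply: (left_case (b := 1)) => //.
  by apply/andP; split => //; apply: leq_trans ls.
- move=> hs; apply: (right_case (b := size ps)) => //.
  + by apply/andP; split; clear -rs lr; lia.
  + by rewrite ltnn.
Qed.

End Main.

Unset Implicit Arguments.

Theorem mainTheorem7 (V : finType) (E : rel V) (T : mpq V) (x y : V)
    (px py : seq nat) (ps : seq ({set V} * option (mpq V))) (a : nat) :
  simple_graph E -> interval_graph E -> mpq_tree E T ->
  E x y -> node_at T x px -> node_at T y py ->
  prefix px py -> px != py ->
  almost_rotable T px py ->
  starts_in_central T x px py ps a ->
  (forall z, z \in Vsub ps a -> z != y -> ~~ E y z) ->
  [\/ exists b, [/\ 1 < b <= lpos x ps, sec ps a :\ x \subset sec ps b &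
                     sec ps b.-1 :&: sec ps b \subset sec ps a],
      exists b, [/\ rpos x ps <= b < size ps, sec ps a :\ x \subset sec ps b &
                     sec ps b :&: sec ps b.+1 \subset sec ps a],
      sec ps a :\ x \subset sec ps 1 |
      sec ps a :\ x \subset sec ps (size ps)] ->
  interval_edge E x y.
Proof.
move=> Hsg _ Hmpq Exy Hnx Hny Hpre Hne Halm Hstart HVa Hc.
exact: (main_sec Hsg Hmpq Exy Hnx Hny Hpre Hne Halm Hstart HVa Hc).
Qed.
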